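(* Consider the following slot-assignment problem. There are $M$ agents $a_1,\dots,a_M$ and $N$ stations $s_1,\dots,s_N$, a processing time $T\in\mathbb{Z}_{>0}$ and an integer $K\ge 1$; the time window $[0,KT)$ of each station $s_j$ is divided into $K$ working slots $[kT,(k+1)T)$, $k=0,\dots,K-1$. For every agent $a_i$ and station $s_j$ an arrival time $e_{i,j}\ge 0$ is given. An assignment maps each agent $a_i$ either to the NULL station or to a station $s_j$ together with a working slot $k\in\{0,\dots,K-1\}$ such that $e_{i,j}\le kT$, where no working slot of any station is assigned to more than one agent. The total idle time of an assignment is $T$ times the number of working slots (over all stations) that are not assigned to any agent, i.e. $T\,(NK-\#\{\text{agents not assigned NULL}\})$. Define the unweighted ITO flow network as follows: vertices are a source, a sink, one agent vertex $a_i$ per agent, and one working slot vertex $s_{j,k}$ for each station $s_j$ and $k=0,\dots,K-1$. Edges are: source $\to a_i$ with capacity $1$ for every $i$; $a_i\to s_{j,k}$ with capacity $1$ if and only if $k$ is the smallest integer in $\{0,\dots,K-1\}$ with $e_{i,j}\le kT$ (no edge from $a_i$ to station $s_j$ if no such $k$ exists); $s_{j,k-1}\to s_{j,k}$ with capacity $K$ for all $j$ and $k=1,\dots,K-1$; and $s_{j,k}\to$ sink with capacity $1$ for all $j,k$. Then every integral maximum flow on this network corresponds to an assignment minimizing the total idle time: decomposing the flow into source–sink paths, each path of the form source $\to a_i\to s_{j,k_0}\to s_{j,k_0+1}\to\cdots\to s_{j,k}\to$ sink assigns agent $a_i$ to working slot $k$ of station $s_j$, and every agent not on such a path is assigned the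 NULL station; the resulting assignment is feasible and has minimum total idle time among all assignments.
   Context: This is the station-assignment part of One-Shot Target Assignment and Path Finding in a sortation center: agents queue at stations, each station admits at most one agent per working slot of length $T$, and an agent whose (estimated) arrival time at a station is $e$ can occupy any working slot of that station starting at a time $kT\ge e$ within the window. Agents assigned the NULL station are inactive and do not affect the total idle time. *)

(* Defs.v *)
From mathcomp Require Import all_boot all_order all_algebra.
Set Implicit Arguments. Unset Strict Implicit. Unset Printing Implicit Defensive.
Import Order.TTheory GRing.Theory Num.Theory.

Section Flows.
Variables (V : finType) (cap : V -> V -> nat) (s t : V).

Definition is_flow (f : V -> V -> nat) : Prop :=
  (forall u v, f u v <= cap u v) /\
  (forall v, v != s -> v != t -> \sum_(u : V) f u v = \sum_(w : V) f v w).

Definition flow_value (f : V -> V -> nat) : int :=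
  (\sum_(v : V) f s v)%:Z - (\sum_(v : V) f v s)%:Z.

Definition is_max_flow (f : V -> V -> nat) : Prop :=
  is_flow f /\ forall g, is_flow g -> (flow_value g <= flow_value f)%R.

Definition path_edges (p : seq V) : seq (V * V) := zip p (behead p).

Definition st_path (p : seq V) : Prop :=
  exists rest, p = s :: rest /\ last s rest = t /\
               path (fun u v => 0 < cap u v) s rest.

Definition path_decomposition (f : V -> V -> nat) (P : seq (seq V)) : Prop :=
  (forall p, p \in P -> st_path p) /\
  (forall u v, f u v = \sum_(p <- P) count (pred1 (u, v)) (path_edges p)).
End Flows.

(* vertices: inl true = source, inl false = sink, inr (inl i) = agent a_i,
   inr (inr (j,k)) = working slot s_{j,k} *)
Notation ito_vtx M N K := (bool + ('I_M + ('I_N * 'I_K)))%type.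

Definition ito_src {M N K : nat} : ito_vtx M N K := inl true.
Definition ito_snk {M N K : nat} : ito_vtx M N K := inl false.
Definition ito_agent {M N K : nat} (i : 'I_M) : ito_vtx M N K := inr (inl i).
Definition ito_slot {M N K : nat} (j : 'I_N) (k : 'I_K) : ito_vtx M N K :=
  inr (inr (j, k)).

Local Open Scope ring_scope.

Definition first_slot (R : realFieldType) (M N K T : nat)
    (e : 'I_M -> 'I_N -> R) (i : 'I_M) (j : 'I_N) (k : 'I_K) : bool :=
  (e i j <= ((k * T)%N)%:R) &&
  [forall k' : 'I_K, (k' < k)%N ==> ~~ (e i j <= ((k' * T)%N)%:R)].

Definition ito_cap (R : realFieldType) (M N K T : nat) (e : 'I_M -> 'I_N -> R)
    (u v : ito_vtx M N K) : nat :=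
  match u, v with
  | inl true, inr (inl _) => 1
  | inr (inl i), inr (inr (j, k)) =>
      if first_slot T e i j k then 1 else 0
  | inr (inr (j, k)), inr (inr (j', k')) =>
      if (j == j') && (nat_of_ord k' == (nat_of_ord k).+1) then K else 0
  | inr (inr _), inl false => 1
  | _, _ => 0%N
  end.

(* None = NULL station; Some (j,k) = working slot k of station s_j *)
Definition assignment (M N K : nat) := 'I_M -> option ('I_N * 'I_K).

Definition feasible (R : realFieldType) (M N K T : nat)
    (e : 'I_M -> 'I_N -> R) (a : assignment M N K) : Prop :=
  (forall i j k, a i = Some (j, k) -> e i j <= ((k * T)%N)%:R) /\
  (forall i i', a i != None -> a i = a i' -> i = i').

Definition total_idle_time (M N K T : nat) (a : assignment M N K) : nat :=
  (T * (N * K - #|[set i | a i != None]|))%N.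

Definition min_idle (R : realFieldType) (M N K T : nat)
    (e : 'I_M -> 'I_N -> R) (a : assignment M N K) : Prop :=
  feasible T e a /\
  forall b : assignment M N K, feasible T e b ->
    (total_idle_time T a <= total_idle_time T b)%N.

(* the assignment read off a path decomposition: agent a_i is assigned slot
   s_{j,k} if some path goes source -> a_i -> ... -> s_{j,k} -> sink, and the
   NULL station if no path passes through a_i *)
Definition induced_assignment (M N K : nat) (P : seq (seq (ito_vtx M N K)))
    (a : assignment M N K) : Prop :=
  forall i, match a i with
  | None => forall p, p \in P -> ito_agent i \notin p
  | Some (j, k) => exists2 p, p \in P &
      (nth ito_src p 1 == ito_agent i) &&
      (nth ito_src p (size p).-2 == ito_slot j k)
  end.

(* Main.v *)
Require Import Defs.
From mathcomp Require Import all_boot all_order all_algebra.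
From mathcomp Require Import zify.
Set Implicit Arguments. Unset Strict Implicit. Unset Printing Implicit Defensive.
Import Order.TTheory GRing.Theory Num.Theory.

Section Generic.
Variable V : finType.

Lemma pe_cons (x y : V) r : path_edges (x :: y :: r) = (x, y) :: path_edges (y :: r).
Proof. by []. Qed.

Lemma sum_in (E : seq (V * V)) w :
  \sum_(u : V) count (pred1 (u, w)) E = count (fun e => e.2 == w) E.
Proof.
elim: E => [|[a b] E IH]; first by rewrite big1.
rewrite /= big_split /= IH; congr (_ + _).
rewrite (bigD1 a) //= big1 => [|u Hu]; first by rewrite xpair_eqE eqxx addn0.
by rewrite xpair_eqE eq_sym (negbTE Hu).
Qed.

Lemma sum_out (E : seq (V * V)) w :
  \sum_(u : V) count (pred1 (w, u)) E = count (fun e => e.1 == w) E.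
Proof.
elim: E => [|[a b] E IH]; first by rewrite big1.
rewrite /= big_split /= IH; congr (_ + _).
rewrite (bigD1 b) //= big1 => [|u Hu]; first by rewrite xpair_eqE eqxx andbT addn0.
by rewrite xpair_eqE [b == u]eq_sym (negbTE Hu) andbF.
Qed.

Lemma count_in_edges (x : V) r w :
  count (fun e => e.2 == w) (path_edges (x :: r)) = count (pred1 w) r.
Proof. by elim: r x => [|y r IH] x //=; rewrite IH. Qed.

Lemma count_out_edges (x : V) r w :
  count (fun e => e.1 == w) (path_edges (x :: r)) = count (pred1 w) (belast x r).
Proof. by elim: r x => [|y r IH] x //=; rewrite IH. Qed.

Lemma path_conserve (s t w : V) rest : last s rest = t -> w != s -> w != t ->
  \sum_(u : V) count (pred1 (u, w)) (path_edges (s :: rest)) =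
  \sum_(x : V) count (pred1 (w, x)) (path_edges (s :: rest)).
Proof.
move=> Hl Hs Ht; rewrite sum_in sum_out count_in_edges count_out_edges.
case/lastP: rest Hl => [|r y] //=; rewrite last_rcons belast_rcons => Ey.
rewrite -Ey in Ht.
rewrite -cats1 count_cat /= [s == w]eq_sym (negbTE Hs) [y == w]eq_sym (negbTE Ht).
by rewrite addn0 addnC.
Qed.

Lemma path_out_src (s : V) (rest : seq V) : s \notin rest -> rest != [::] ->
  \sum_(v : V) count (pred1 (s, v)) (path_edges (s :: rest)) = 1.
Proof.
move=> Hn; rewrite sum_out count_out_edges; case: rest Hn => [|y r] //= Hn _.
rewrite eqxx; congr (_.+1); apply/eqP; rewrite -leqn0 leqNgt -has_count.
apply/hasP=> [[z /mem_belast Hz /eqP Ez]]; subst z; by rewrite Hz in Hn.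
Qed.

Lemma path_in_src (s : V) (rest : seq V) : s \notin rest ->
  \sum_(v : V) count (pred1 (v, s)) (path_edges (s :: rest)) = 0.
Proof.
move=> Hn; rewrite sum_in count_in_edges; apply/eqP; rewrite -leqn0 leqNgt -has_count.
by apply/hasP=> [[z Hz /eqP Ez]]; subst z; rewrite Hz in Hn.
Qed.

Lemma edge_snd (x : V) r u v : 0 < count (pred1 (u, v)) (path_edges (x :: r)) -> v \in r.
Proof.
move=> H; have: 0 < count (pred1 v) r.
  rewrite -(count_in_edges x); apply: leq_trans H _; apply: sub_count => -[a b] /eqP [_ ->] /=.
  by [].
by rewrite -has_count => /hasP [z Hz /eqP Ez]; rewrite -Ez.
Qed.

Lemma edge_fst (x : V) r u v : 0 < count (pred1 (u, v)) (path_edges (x :: r)) -> u \in x :: r.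
Proof.
move=> H; have: 0 < count (pred1 u) (belast x r).
  rewrite -(count_out_edges x); apply: leq_trans H _; apply: sub_count => -[a b] /eqP [-> _] /=.
  by [].
by rewrite -has_count => /hasP [z /mem_belast Hz /eqP Ez]; rewrite -Ez.
Qed.

Lemma edge_le1 (x : V) r u v : uniq (x :: r) -> count (pred1 (u, v)) (path_edges (x :: r)) <= 1.
Proof.
move=> Hu; apply: (@leq_trans (count (pred1 u) (belast x r))).
  rewrite -(count_out_edges x); apply: sub_count => -[a b] /eqP [-> _] /=; by [].
apply: (@leq_trans (count (pred1 u) (x :: r))).
  by rewrite lastI -cats1 count_cat leq_addr.
by rewrite count_uniq_mem // leq_b1.
Qed.

Lemma edge_rel (e : rel V) (x : V) r u v : path e x r ->
  0 < count (pred1 (u, v)) (path_edges (x :: r)) -> e u v.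
Proof.
elim: r x => [|y r IH] x //= /andP [Hxy Hp].
rewrite /= => H; case E: ((x, y) == (u, v)); first by case/eqP: E => <- <-.
by rewrite E in H; apply: (IH y).
Qed.

Lemma pos_sum (F : V -> nat) : 0 < \sum_(u : V) F u -> exists u, 0 < F u.
Proof.
case: (pickP (fun u => 0 < F u)) => [u Hu|H]; first by exists u.
by rewrite big1 // => u _; move: (H u) => /negbT; rewrite lt0n negbK => /eqP.
Qed.

Lemma sum_lt (F G : V -> nat) u0 : (forall u, F u <= G u) -> F u0 < G u0 ->
  \sum_(u : V) F u < \sum_(u : V) G u.
Proof.
move=> H H0; rewrite (bigD1 u0) //= [X in _ < X](bigD1 u0) //=.
have : \sum_(u | u != u0) F u <= \sum_(u | u != u0) G u by apply: leq_sum.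
lia.
Qed.
End Generic.


Lemma term_le_sum (V : finType) (F : V -> nat) v : F v <= \sum_(u : V) F u.
Proof. by rewrite (bigD1 v) //= leq_addr. Qed.

Lemma edge_mid (V : finType) (x y : V) b c :
  0 < count (pred1 (last x b, y)) (path_edges (x :: b ++ y :: c)).
Proof.
elim: b x => [|z b IH] x /=; first by rewrite eqxx.
by apply: leq_trans (IH z) _; rewrite leq_addl.
Qed.

Section Decomp.
Variables (V : finType) (cap : V -> V -> nat) (s t : V) (rank : V -> nat).
Hypothesis Hrank : forall u v, 0 < cap u v -> rank u < rank v.
Hypothesis Hs : forall u, cap u s = 0.
Hypothesis Ht : forall v, cap t v = 0.

Lemma flow_pos f : is_flow cap s t f -> forall u v, 0 < f u v -> 0 < cap u v.
Proof. by case=> Hc _ u v H; apply: leq_trans H (Hc u v). Qed.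

Lemma back f : is_flow cap s t f -> forall u, (exists v, 0 < f u v) ->
  exists b, path (fun x y => 0 < f x y) s b /\ last s b = u.
Proof.
move=> Hf; have Hp := flow_pos Hf.
suff H : forall n u, rank u < n -> (exists v, 0 < f u v) ->
    exists b, path (fun x y => 0 < f x y) s b /\ last s b = u.
  by move=> u; apply: (H (rank u).+1).
elim=> [//|n IH] u Hr [v Hv].
case Eus: (u == s); first by exists [::]; rewrite (eqP Eus).
have Eut : u != t.
  by apply/negP => /eqP Eu; subst u; move: (Hp _ _ Hv); rewrite Ht.
case: (Hf) => _ Hc.
have : 0 < \sum_(x : V) f x u.
  by rewrite (Hc u (negbT Eus) Eut); apply: leq_trans Hv (term_le_sum _ _).
case/pos_sum => x Hx.
have Hrx : rank x < rank u by apply: Hrank; apply: Hp Hx.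
have [b [Hb1 Hb2]] : exists b, path (fun x y => 0 < f x y) s b /\ last s b = x.
  by apply: IH; [lia | exists u].
by exists (rcons b u); rewrite rcons_path Hb1 Hb2 Hx last_rcons.
Qed.

Lemma fwd f : is_flow cap s t f -> forall v, (exists u, 0 < f u v) ->
  exists c, path (fun x y => 0 < f x y) v c /\ last v c = t.
Proof.
move=> Hf; have Hp := flow_pos Hf.
pose mx := \big[maxn/0%N]_(x : V) rank x.
suff H : forall n v, mx - rank v < n -> (exists u, 0 < f u v) ->
    exists c, path (fun x y => 0 < f x y) v c /\ last v c = t.
  by move=> v; apply: (H (mx - rank v).+1).
elim=> [//|n IH] v Hr [u Hu].
case Evt: (v == t); first by exists [::]; rewrite (eqP Evt).
have Evs : v != s.
  by apply/negP => /eqP Ev; subst v; move: (Hp _ _ Hu); rewrite Hs.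
case: (Hf) => _ Hc.
have : 0 < \sum_(y : V) f v y.
  by rewrite -(Hc v Evs (negbT Evt)); apply: leq_trans Hu (term_le_sum _ _).
case/pos_sum => y Hy.
have Hry : rank v < rank y by apply: Hrank; apply: Hp Hy.
have Hmy : rank y <= mx by exact: (@leq_bigmax V rank y).
have [c [Hc1 Hc2]] : exists c, path (fun x y => 0 < f x y) y c /\ last y c = t.
  by apply: IH; [lia | exists v].
by exists (y :: c); rewrite /= Hy Hc1 Hc2.
Qed.

Definition tot (f : V -> V -> nat) := \sum_(u : V) \sum_(v : V) f u v.

Lemma decomp f : is_flow cap s t f -> exists P, path_decomposition cap s t f P.
Proof.
suff H : forall n f, tot f < n -> is_flow cap s t f ->
    exists P, path_decomposition cap s t f P.
  by apply: (H (tot f).+1).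
elim=> [//|n IH] {}f Hn Hf.
case: (pickP (fun uv : V * V => 0 < f uv.1 uv.2)) => [[u0 v0] /= H0 | Hz]; last first.
  exists [::]; split => // u v; rewrite big_nil.
  by move: (Hz (u,v)) => /= /negbT; rewrite lt0n negbK => /eqP.
have [b [Hb Lb]] := back Hf (ex_intro _ v0 H0).
have [c [Hc Lc]] := fwd Hf (ex_intro _ u0 H0).
set p := s :: (b ++ v0 :: c).
have Hpath : path (fun x y => 0 < f x y) s (b ++ v0 :: c).
  by rewrite cat_path Hb Lb /= H0 Hc.
have Hlast : last s (b ++ v0 :: c) = t by rewrite last_cat /= Lc.
have Huniq : uniq p.
  apply: (@sorted_uniq _ (fun x y => rank x < rank y)).
  - by move=> x y z; apply: ltn_trans.
  - by move=> x; rewrite /= ltnn.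
  - rewrite /p /=; apply: sub_path Hpath => x y H; apply: Hrank; exact: flow_pos Hf _ _ H.
pose cnt u v := count (pred1 (u,v)) (path_edges p).
have Hcf : forall u v, cnt u v <= f u v.
  move=> u v; case E: (cnt u v) => [//|k].
  have Hpos : 0 < cnt u v by rewrite E.
  have := edge_le1 u v Huniq; rewrite -/(cnt u v) E => Hk.
  have := edge_rel Hpath Hpos; lia.
pose f' u v := f u v - cnt u v.
have Hf' : is_flow cap s t f'.
  split => [u v|w Ws Wt]; first by apply: leq_trans (leq_subr _ _) (Hf.1 u v).
  rewrite /f' sumnB; last by move=> *; apply: Hcf.
  rewrite sumnB; last by move=> *; apply: Hcf.
  by rewrite (Hf.2 w Ws Wt) /cnt (path_conserve Hlast Ws Wt).
have Htot : tot f' < n.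
  suff : tot f' < tot f by move: Hn; clear; lia.
  apply: (@sum_lt _ _ _ u0).
  - by move=> u; apply: leq_sum => v _; apply: leq_subr.
  - apply: (@sum_lt _ _ _ v0) => [v|]; first by apply: leq_subr.
    rewrite /f' ltn_subrL; apply/andP; split=> //; rewrite /cnt /p -Lb; exact: edge_mid.
have [P' [HP1 HP2]] := IH f' Htot Hf'.
exists (p :: P'); split.
  move=> q; rewrite inE => /orP [/eqP ->|]; last exact: HP1.
  exists (b ++ v0 :: c); split => //; split => //.
  by apply: sub_path Hpath => x y H; exact: flow_pos Hf _ _ H.
move=> u v; rewrite big_cons -HP2 /f' -/(cnt u v).
by rewrite subnKC.
Qed.
End Decomp.


Section ITO.
Variables (R : realFieldType) (M N K T : nat) (e : 'I_M -> 'I_N -> R).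

Local Notation V := (ito_vtx M N K).
Local Notation cap := (@ito_cap R M N K T e).
Local Notation src := (@ito_src M N K).
Local Notation snk := (@ito_snk M N K).
Local Notation agent := (@ito_agent M N K).
Local Notation slot := (@ito_slot M N K).

Definition rank (v : V) : nat :=
  match v with
  | inl true => 0 | inl false => K.+2 | inr (inl _) => 1 | inr (inr (_, k)) => (nat_of_ord k).+2
  end.

Lemma cap_rank u v : 0 < cap u v -> rank u < rank v.
Proof.
case: u => [[]|[i|[j k]]]; case: v => [[]|[i'|[j' k']]] //=.
all: first [by move=> _; rewrite !ltnS ltn_ord | by case: ifP => // /andP [_ /eqP ->]].
Qed.

Lemma cap_src u : cap u src = 0.
Proof. by case: u => [[]|[i|[j k]]]. Qed.

Lemma cap_snk v : cap snk v = 0.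
Proof. by case: v => [[]|[i|[j k]]]. Qed.

Definition is_slot (v : V) : bool := if v is inr (inr _) then true else false.

Lemma path_snk (r : seq V) : path (fun u v => 0 < cap u v) snk r -> r = [::].
Proof. by case: r => [//|x r]. Qed.

Lemma slot_walk j (k0 : 'I_K) (rest : seq V) :
  path (fun u v => 0 < cap u v) (slot j k0) rest -> last (slot j k0) rest = snk ->
  exists (k : 'I_K) (r : seq V), k0 <= k /\
    slot j k0 :: rest = r ++ [:: slot j k; snk] /\ all is_slot r.
Proof.
elim: rest k0 => [//|x rest IH] k0 /= /andP [Hc Hp] Hl.
case: x Hc Hp Hl => [[]|[i|[j' k']]] //= Hc Hp Hl.
- by rewrite (path_snk Hp); exists k0, [::].
- move: Hc; case: ifP => // /andP [/eqP Ej /eqP Ek] _; subst j'.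
  have [k [r [Hk [Er Ar]]]] := IH k' Hp Hl.
  exists k, (slot j k0 :: r); split; first by rewrite Ek in Hk; lia.
  by rewrite Er.
Qed.

Lemma shape (p : seq V) : st_path cap src snk p ->
  exists i j (k0 k : 'I_K) (r : seq V), first_slot T e i j k0 /\ k0 <= k /\
    p = src :: agent i :: r ++ [:: slot j k; snk] /\ all is_slot r.
Proof.
case=> rest [-> [Hl Hp]].
case: rest Hl Hp => [//|x rest] /= Hl /andP [Hc Hp].
case: x Hc Hp Hl => [[]|[i|[j k]]] //= _ Hp Hl.
case: rest Hp Hl => [//|y rest] /= /andP [Hc Hp] Hl.
case: y Hc Hp Hl => [[]|[i'|[j k0]]] //=.
case: ifP => // Hfs _ Hp Hl.
have [k [r [Hk [Er Ar]]]] := slot_walk Hp Hl.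
by exists i, j, k0, k, r; rewrite -Er.
Qed.

Lemma edge_end (z x y : V) s : 0 < count (pred1 (x, y)) (path_edges (z :: s ++ [:: x; y])).
Proof.
elim: s z => [|w s IH] z /=; first by rewrite eqxx addn0 addn1.
by apply: leq_trans (IH w) _; rewrite leq_addl.
Qed.

Lemma path_info (p : seq V) : st_path cap src snk p ->
  exists i j (k : 'I_K), [/\ nth src p 1 = agent i, nth src p (size p).-2 = slot j k,
    (e i j <= ((k * T)%N)%:R)%R, (forall i', agent i' \in p -> i' = i) &
    0 < count (pred1 (slot j k, snk)) (path_edges p)].
Proof.
move=> /shape [i [j [k0 [k [r [Hf [Hk [-> Ar]]]]]]]].
exists i, j, k; split => //.
- rewrite /= size_cat /= addn2 /= nth_cat ltnn subnn //.
- case/andP: Hf => H _; apply: le_trans H _; rewrite ler_nat; exact: leq_mul.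
- move=> i'; rewrite !inE mem_cat !inE => /or3P [//|/eqP [->]//|/orP[Hr|/orP[//|//]]].
  by move/allP: Ar => /(_ _ Hr).
- by rewrite -cat_cons; apply: edge_end.
Qed.
End ITO.


Lemma elem_le_sum (S : eqType) (Q : seq S) (F : S -> nat) q :
  q \in Q -> F q <= \sum_(x <- Q) F x.
Proof.
elim: Q => [//|x Q IH]; rewrite inE big_cons => /orP [/eqP ->|H]; first exact: leq_addr.
by apply: leq_trans (IH H) _; apply: leq_addl.
Qed.

Lemma two_le_sum (S : eqType) (Q : seq S) (F : S -> nat) p p' :
  p \in Q -> p' \in Q -> p != p' -> 0 < F p -> 0 < F p' -> 1 < \sum_(q <- Q) F q.
Proof.
elim: Q => [//|x Q IH]; rewrite !inE big_cons => Hp Hp' Hne F1 F2.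
case: (eqVneq x p) => [Ex|Nxp].
  subst x; have : p' \in Q by case/orP: Hp' => // /eqP E; rewrite E eqxx in Hne.
  move/(elem_le_sum F) => H; lia.
case: (eqVneq x p') => [Ex|Nxp'].
  subst x; have : p \in Q by case/orP: Hp => // /eqP E; rewrite E eqxx in Nxp.
  move/(elem_le_sum F) => H; lia.
have H1 : p \in Q by case/orP: Hp => // /eqP E; rewrite E eqxx in Nxp.
have H2 : p' \in Q by case/orP: Hp' => // /eqP E; rewrite E eqxx in Nxp'.
by apply: leq_trans (IH H1 H2 Hne F1 F2) _; apply: leq_addl.
Qed.

Lemma pos_sum_seq (S : eqType) (Q : seq S) (F : S -> nat) :
  0 < \sum_(q <- Q) F q -> exists2 q, q \in Q & 0 < F q.
Proof.
elim: Q => [|x Q IH]; first by rewrite big_nil.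
rewrite big_cons; case: (posnP (F x)) => [->|Hx] /= H; last by exists x; rewrite ?mem_head.
by have [q Hq Fq] := IH H; exists q; rewrite // inE Hq orbT.
Qed.

Lemma sum_le1 (I : finType) (P : pred I) (F : I -> nat) :
  (forall i, F i <= 1) -> (forall i i', P i -> P i' -> 0 < F i -> 0 < F i' -> i = i') ->
  \sum_(i | P i) F i <= 1.
Proof.
move=> H1 Hu; case: (pickP (fun i => P i && (0 < F i))) => [i0 /andP [Pi0 Fi0]|H].
  rewrite (bigD1 i0) //= big1 => [|i /andP [Pi Ni]]; first by rewrite addn0.
  apply/eqP; rewrite -leqn0 leqNgt; apply/negP => Fi; move/negP: Ni; apply.
  by apply/eqP; apply: (Hu _ _ Pi Pi0 Fi Fi0).
rewrite big1 // => i Pi; move: (H i); rewrite Pi /= => /negbT.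
by rewrite lt0n negbK => /eqP.
Qed.

Lemma last_edge (V : finType) (x u t : V) s : t \notin x :: s ->
  0 < count (pred1 (u, t)) (path_edges (x :: rcons s t)) -> u = last x s.
Proof.
elim: s x => [|y s IH] x /=.
  by rewrite inE => _; rewrite addn0 xpair_eqE eqxx andbT lt0b => /eqP.
rewrite !inE negb_or => /andP [Nx Hy].
move: Hy; rewrite negb_or => /andP [Ny Ns].
rewrite xpair_eqE [y == t]eq_sym (negbTE Ny) andbF add0n; apply: IH.
by rewrite inE negb_or Ny Ns.
Qed.

Lemma last_map_iota (T : Type) (f : nat -> T) x m n :
  last x (map f (iota m n.+1)) = f (m + n).
Proof.
elim: n x m => [|n IH] x m /=; first by rewrite addn0.
by have := IH (f m) m.+1; rewrite /= => ->; rewrite addSnnS.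
Qed.


Section ITO2.
Variables (R : realFieldType) (M N K T : nat) (e : 'I_M -> 'I_N -> R).

Local Notation V := (ito_vtx M N K).
Local Notation cap := (@ito_cap R M N K T e).
Local Notation src := (@ito_src M N K).
Local Notation snk := (@ito_snk M N K).
Local Notation agent := (@ito_agent M N K).
Local Notation slot := (@ito_slot M N K).

Definition agent_paths (P : seq (seq V)) i := [seq p <- P | nth src p 1 == agent i].
Definition slot_of (v : V) : option ('I_N * 'I_K) :=
  if v is inr (inr jk) then Some jk else None.
Definition aP (P : seq (seq V)) : assignment M N K := fun i =>
  if agent_paths P i is p :: _ then slot_of (nth src p (size p).-2) else None.

Variable f : V -> V -> nat.
Variable P : seq (seq V).
Hypothesis HP : path_decomposition cap src snk f P.
Hypothesis Hf : is_flow cap src snk f.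

Lemma aP_spec i : (aP P i = None /\ forall p, p \in P -> agent i \notin p) \/
   exists j k p, [/\ aP P i = Some (j,k), p \in P, nth src p 1 = agent i,
     nth src p (size p).-2 = slot j k &
     (e i j <= ((k * T)%N)%:R)%R /\ 0 < count (pred1 (slot j k, snk)) (path_edges p)].
Proof.
rewrite /aP; case E: (agent_paths P i) => [|p ps].
  left; split => // q Hq; apply/negP => Hin.
  have [i' [j [k [H1 _ _ Hu _]]]] := path_info (HP.1 q Hq).
  have Ei := Hu i Hin; subst i'.
  have : q \in agent_paths P i by rewrite mem_filter H1 eqxx Hq.
  by rewrite E.
right; have : p \in agent_paths P i by rewrite E mem_head.
rewrite mem_filter => /andP [/eqP Ha Hp].
have [i' [j [k [H1 H2 He Hu Hc]]]] := path_info (HP.1 p Hp).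
rewrite Ha in H1; case: H1 => Ei; subst i'.
by exists j, k, p; rewrite H2; split.
Qed.

Lemma aP_induced : induced_assignment P (aP P).
Proof.
move=> i; case: (aP_spec i) => [[-> H]|[j [k [p [-> Hp H1 H2 _]]]]] //.
by exists p => //; rewrite H1 H2 !eqxx.
Qed.

Lemma aP_feasible : feasible T e (aP P).
Proof.
split.
  move=> i j k E; case: (aP_spec i) => [[E' _]|[j' [k' [p [E' _ _ _ [He _]]]]]];
    rewrite E in E' => //.
  by case: E' => -> ->.
move=> i i' Hn Eq.
case: (aP_spec i) => [[E _]|[j [k [p [E Hp H1 _ [_ Hc]]]]]]; first by rewrite E in Hn.
case: (aP_spec i') => [[E' _]|[j' [k' [p' [E' Hp' H1' _ [_ Hc']]]]]].
  by rewrite -Eq E in E'.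
rewrite E E' in Eq; case: Eq => Ej Ek; subst j' k'.
case: (eqVneq i i') => // Hne; exfalso.
have Hpp : p != p'.
  apply/eqP => Epp; subst p'; rewrite H1 in H1'; case: H1' => Ei.
  by rewrite Ei eqxx in Hne.
have := @two_le_sum _ P (fun q => count (pred1 (slot j k, snk)) (path_edges q)) _ _ Hp Hp' Hpp Hc Hc'; rewrite -(HP.2 (slot j k) snk).
by have := Hf.1 (slot j k) snk; rewrite /=; lia.
Qed.

Lemma flow_f_le : (flow_value src f <= (#|[set i | aP P i != None]|)%:Z)%R.
Proof.
rewrite /flow_value.
have -> : \sum_(v : V) f v src = 0.
  by rewrite big1 // => v _; apply/eqP; rewrite -leqn0 -(cap_src T e v); apply: Hf.1.
rewrite subr0 lez_nat.
have Hbd : forall v, f src v <= (if v is inr (inl i) then (aP P i != None : nat) else 0).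
  case=> [[]|[i|[j k]]]; try by apply: Hf.1.
  case: (posnP (f src (agent i))) => [->//|Hpos].
  have Hle : f src (agent i) <= 1 by apply: Hf.1.
  apply: leq_trans Hle _.
  move: (Hpos); rewrite (HP.2 src (agent i)) => /pos_sum_seq [q Hq Hc].
  case: (aP_spec i) => [[_ Hn]|[j [k [p [-> _ _ _ _]]]]] //.
  have [rest [Eq _]] := HP.1 q Hq; subst q.
  by move: (Hn _ Hq); rewrite inE (edge_snd Hc) orbT.
apply: (@leq_trans (\sum_(v : V) (if v is inr (inl i) then (aP P i != None : nat) else 0))).
  by apply: leq_sum => v _; exact: Hbd v.
rewrite big_sumType big_sumType /= big1 // add0n.
rewrite [X in _ + X]big1 // addn0.
rewrite -sum1_card [X in _ <= X]big_mkcond; apply: leq_sum => i _; rewrite inE; by case: (_ != _).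
Qed.
End ITO2.


Lemma insubd_ord K (d : 'I_K) m : m < K -> nat_of_ord (insubd d m) = m.
Proof. by move=> H; rewrite -[nat_of_ord _]/(val _) val_insubd H. Qed.

Section ITO3.
Variables (R : realFieldType) (M N K T : nat) (e : 'I_M -> 'I_N -> R).
Hypothesis HK : 0 < K.

Local Notation V := (ito_vtx M N K).
Local Notation cap := (@ito_cap R M N K T e).
Local Notation src := (@ito_src M N K).
Local Notation snk := (@ito_snk M N K).
Local Notation agent := (@ito_agent M N K).
Local Notation slot := (@ito_slot M N K).

Variable b : assignment M N K.
Hypothesis Hb : feasible T e b.

Definition fs (i : 'I_M) (j : 'I_N) (k : 'I_K) : 'I_K :=
  fintype.arg_min k (fun k' : 'I_K => (e i j <= ((k' * T)%N)%:R)%R)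
    (fun k' : 'I_K => nat_of_ord k').

Lemma fs_spec i j (k : 'I_K) : (e i j <= ((k * T)%N)%:R)%R ->
  first_slot T e i j (fs i j k) /\ fs i j k <= k.
Proof.
move=> Hk; rewrite /fs; case: (@arg_minnP _ k (fun k' : 'I_K => (e i j <= ((k' * T)%N)%:R)%R) (fun k' : 'I_K => nat_of_ord k') Hk) => k0 Hk0 Hmin.
split; last exact: Hmin.
rewrite /first_slot Hk0 /=; apply/forallP => k'; apply/implyP => Hlt; apply/negP => H.
by have := Hmin k' H; lia.
Qed.

Definition sl (j : 'I_N) (d : 'I_K) (m : nat) : V := slot j (insubd d m).

Definition qrest i : seq V :=
  if b i is Some (j, k) then
    agent i :: rcons (map (sl j k) (iota (fs i j k) (k - fs i j k).+1)) snk
  else [::].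

Lemma chain_path j d n m : m + n < K ->
  path (fun u v => 0 < cap u v) (sl j d m) (rcons (map (sl j d) (iota m.+1 n)) snk).
Proof.
elim: n m => [|n IH] m Hm; first by [].
rewrite /= IH ?andbT; last lia.
rewrite /sl /ito_slot /= eqxx !insubd_ord ?eqxx //; lia.
Qed.

Lemma q_path i j k : b i = Some (j, k) -> path (fun u v => 0 < cap u v) src (qrest i).
Proof.
move=> E; rewrite /qrest E.
have [Hfs Hle] := fs_spec (Hb.1 i j k E).
have Ek0 : insubd k (fs i j k) = fs i j k by apply: val_inj; rewrite val_insubd ltn_ord.
rewrite [path _ _ _]/= (chain_path _ _ (n := k - fs i j k) (m := fs i j k)); last first.
  have := ltn_ord k; lia.
by rewrite /sl Ek0 /= Hfs.
Qed.

Lemma q_last i j k : b i = Some (j, k) -> forall x,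
  0 < count (pred1 (x, snk)) (path_edges (src :: qrest i)) -> x = slot j k.
Proof.
move=> E x; rewrite /qrest E => H.
have Hn : snk \notin src :: (agent i :: map (sl j k) (iota (fs i j k) (k - fs i j k).+1)).
  by rewrite !inE; apply/negP => /or3P [//|//|/mapP [m _]].
rewrite (last_edge Hn H).
change (last (agent i) (map (sl j k) (iota (fs i j k) (k - fs i j k).+1)) = slot j k).
rewrite last_map_iota /sl; congr (ito_slot _ _); apply: val_inj; rewrite val_insubd.
have [_ Hle] := fs_spec (Hb.1 i j k E).
by rewrite subnKC // ltn_ord.
Qed.

Lemma q_agent i j k : b i = Some (j, k) -> forall i', agent i' \in qrest i -> i' = i.
Proof.
move=> E i'; rewrite /qrest E inE => /orP [/eqP [->]//|].
by rewrite mem_rcons inE => /orP [//|/mapP [m _]].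
Qed.

Lemma q_slot i j k : b i = Some (j, k) -> forall j' k', slot j' k' \in qrest i -> j' = j.
Proof.
move=> E j' k'; rewrite /qrest E inE => /orP [//|].
by rewrite mem_rcons inE => /orP [//|/mapP [m _ [->]]].
Qed.

Lemma q_uniq i : uniq (src :: qrest i).
Proof.
case E: (b i) => [[j k]|]; last by rewrite /qrest E.
apply: (@sorted_uniq _ (fun x y => rank x < rank y)).
- by move=> x y z; apply: ltn_trans.
- by move=> x; rewrite /= ltnn.
- by apply: sub_path (q_path E) => x y; apply: cap_rank.
Qed.

Definition g (u v : V) : nat :=
  \sum_(i | b i != None) count (pred1 (u, v)) (path_edges (src :: qrest i)).

Lemma g_le1 i u v : count (pred1 (u, v)) (path_edges (src :: qrest i)) <= 1.
Proof. exact: edge_le1 (q_uniq i). Qed.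

Lemma g_cap u v : g u v <= cap u v.
Proof.
have Hc : forall i, 0 < count (pred1 (u,v)) (path_edges (src :: qrest i)) -> 0 < cap u v.
  move=> i; case E: (b i) => [[j k]|]; first exact: edge_rel (q_path E).
  by rewrite /qrest E.
case: (posnP (cap u v)) => [Z|Cpos].
  rewrite /g big1 // => i Hi; apply/eqP; rewrite -leqn0 leqNgt; apply/negP => /Hc.
  by rewrite Z.
have Hsome : forall i, 0 < count (pred1 (u,v)) (path_edges (src :: qrest i)) ->
    exists j k, b i = Some (j, k).
  move=> i; case E: (b i) => [[j k]|]; first by exists j, k.
  by rewrite /qrest E.
case: u Cpos Hc Hsome => [[]|[i0|[j1 k1]]]; case: v => [[]|[i2|[j2 k2]]] //= Cpos Hc Hsome.
- apply: sum_le1 => [i|i i' _ _ P1 P2]; first exact: g_le1.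
  have [j [k E]] := Hsome _ P1; have [j' [k' E']] := Hsome _ P2.
  by rewrite -(q_agent E (edge_snd P1)) (q_agent E' (edge_snd P2)).
- move: Cpos; case: ifP => // _ _.
  apply: sum_le1 => [i|i i' _ _ P1 P2]; first exact: g_le1.
  have [j [k E]] := Hsome _ P1; have [j' [k' E']] := Hsome _ P2.
  move: (edge_fst P1) (edge_fst P2); rewrite !inE /= => H1 H2.
  by rewrite -(q_agent E H1) (q_agent E' H2).
- apply: sum_le1 => [i|i i' _ _ P1 P2]; first exact: g_le1.
  have [j [k E]] := Hsome _ P1; have [j' [k' E']] := Hsome _ P2.
  have H1 := q_last E P1; have H2 := q_last E' P2.
  case: H1 => Ej Ek; case: H2 => Ej' Ek'; subst.
  by apply: Hb.2; rewrite ?E // E'.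
- move: Cpos; case: ifP => // _ _.
  apply: (@leq_trans #|[pred i | [exists kk, b i == Some (j2, kk)]]|).
    rewrite -sum1_card /g big_mkcond [X in _ <= X]big_mkcond /=.
    apply: leq_sum => i _; case: ifP => // _.
    case: (posnP (count (pred1 (inr (inr (j1, k1)), inr (inr (j2, k2))))
                    (path_edges (src :: qrest i)))) => [->//|P1].
    have [j [k E]] := Hsome _ P1.
    have Ej := q_slot E (edge_snd P1); subst j.
    have -> : i \in [pred i | [exists kk, b i == Some (j2, kk)]].
      by rewrite inE; apply/existsP; exists k; rewrite E.
    exact: g_le1.
  suff Hinj : {in [pred i | [exists kk, b i == Some (j2, kk)]] &,
      injective (fun i => if b i is Some (_, kk) then kk else k1)}.
    by have := @leq_card_in _ _ _ _ Hinj; rewrite card_ord.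
  move=> i i'; rewrite !inE => /existsP [kk /eqP Ei] /existsP [kk' /eqP Ei'].
  rewrite Ei Ei' => Ek; subst kk'.
  by apply: Hb.2; rewrite ?Ei // Ei'.
Qed.

Lemma q_last_snk i : b i != None -> last src (qrest i) = snk.
Proof. by rewrite /qrest; case: (b i) => [[j k]|] //= _; rewrite last_rcons. Qed.

Lemma q_src i : src \notin qrest i.
Proof. by have := q_uniq i; rewrite cons_uniq => /andP []. Qed.

Lemma g_flow : is_flow cap src snk g.
Proof.
split; first exact: g_cap.
move=> w Ws Wt; rewrite /g exchange_big [in RHS]exchange_big /=.
apply: eq_bigr => i Hi; exact: path_conserve (q_last_snk Hi) Ws Wt.
Qed.

Lemma g_value : flow_value src g = Posz #|[set i | b i != None]|.
Proof.
rewrite /flow_value.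
have -> : \sum_(v : V) g v src = 0.
  rewrite /g exchange_big big1 // => i _; exact: path_in_src (q_src i).
rewrite subr0 -sum1_card; congr (Posz _).
rewrite /g exchange_big /=.
apply: eq_big => [i|i Hi]; first by rewrite inE.
apply: path_out_src (q_src i) _.
by move: Hi; rewrite /qrest; case: (b i) => [[j k]|].
Qed.
End ITO3.

Theorem theorem1 (R : realFieldType) (M N K T : nat)
    (e : 'I_M -> 'I_N -> R) :
  (0 < T)%N -> (0 < K)%N ->
  (forall i j, (0 <= e i j)%R) ->
  forall f : ito_vtx M N K -> ito_vtx M N K -> nat,
    is_max_flow (ito_cap T e) ito_src ito_snk f ->
    (exists P, path_decomposition (ito_cap T e) ito_src ito_snk f P) /\
    (forall P, path_decomposition (ito_cap T e) ito_src ito_snk f P ->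
       exists a : assignment M N K,
         induced_assignment P a /\ min_idle T e a).
Proof.
move=> HT HK He f [Hf Hmax].
split.
  exact: (decomp (@cap_rank _ _ _ _ _ e) (@cap_src _ _ _ _ _ e) (@cap_snk _ _ _ _ _ e) Hf).
move=> P HP; exists (aP P); split; first exact: aP_induced HP.
split; first exact: aP_feasible HP Hf.
move=> b Hb; rewrite /total_idle_time leq_mul2l; apply/orP; right; apply: leq_sub2l.
have := Hmax _ (g_flow HK Hb); rewrite (g_value HK Hb) => H.
by have := le_trans H (flow_f_le HP Hf); rewrite lez_nat.
Qed.
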